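(* Let $a=a_0+a_1e_1+a_2e_2+a_3e_3\in C\ell_2$. Define $$a^+=\begin{cases}0,& a=0;\\ \dfrac{\bar a}{H_a},& H_a\neq 0;\\ \dfrac{a'}{4(a_0^2+a_3^2)},& H_a=0\text{ and }a\neq 0.\end{cases}$$ Then $a^+$ is the Moore–Penrose inverse of $a$, i.e. $x=a^+$ satisfies $axa=a$, $xax=x$, $(ax)'=ax$, $(xa)'=xa$.
   Context: $C\ell_2$ is the 4-dimensional real associative algebra with basis $1,e_1,e_2,e_3$ and multiplication $e_1^2=e_2^2=1$, $e_3^2=-1$, $e_1e_2=e_3=-e_2e_1$, $e_1e_3=e_2=-e_3e_1$, $e_3e_2=e_1=-e_2e_3$. For $a=a_0+a_1e_1+a_2e_2+a_3e_3$ ($a_i\in\mathbb{R}$): $\bar a=a_0-a_1e_1-a_2e_2-a_3e_3$, $a'=a_0+a_1e_1+a_2e_2-a_3e_3$, $H_a=a\bar a=a_0^2-a_1^2-a_2^2+a_3^2$. A Moore–Penrose inverse of $a$ is an element $x\in C\ell_2$ with $axa=a$, $xax=x$, $(ax)'=ax$, $(xa)'=xa$. *)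

(* Defs.v *)
From Stdlib Require Import Reals.
Open Scope R_scope.

(* a = c0 + c1 e1 + c2 e2 + c3 e3 *)
Record Cl2 : Type := mkCl2 { c0 : R; c1 : R; c2 : R; c3 : R }.

Definition cl_zero : Cl2 := mkCl2 0 0 0 0.

(* multiplication from e1^2 = e2^2 = 1, e3^2 = -1, e1e2 = e3 = -e2e1,
   e1e3 = e2 = -e3e1, e3e2 = e1 = -e2e3, extended bilinearly *)
Definition cl_mul (a b : Cl2) : Cl2 :=
  mkCl2
    (c0 a * c0 b + c1 a * c1 b + c2 a * c2 b - c3 a * c3 b)
    (c0 a * c1 b + c1 a * c0 b + c3 a * c2 b - c2 a * c3 b)
    (c0 a * c2 b + c2 a * c0 b + c1 a * c3 b - c3 a * c1 b)
    (c0 a * c3 b + c3 a * c0 b + c1 a * c2 b - c2 a * c1 b).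

Definition cl_scale (r : R) (a : Cl2) : Cl2 :=
  mkCl2 (r * c0 a) (r * c1 a) (r * c2 a) (r * c3 a).

Definition cl_bar (a : Cl2) : Cl2 := mkCl2 (c0 a) (- c1 a) (- c2 a) (- c3 a).

Definition cl_prime (a : Cl2) : Cl2 := mkCl2 (c0 a) (c1 a) (c2 a) (- c3 a).

(* H_a = a a-bar (a real number) *)
Definition H (a : Cl2) : R :=
  c0 a ^ 2 - c1 a ^ 2 - c2 a ^ 2 + c3 a ^ 2.

Definition is_MP_inverse (a x : Cl2) : Prop :=
  cl_mul (cl_mul a x) a = a /\
  cl_mul (cl_mul x a) x = x /\
  cl_prime (cl_mul a x) = cl_mul a x /\
  cl_prime (cl_mul x a) = cl_mul x a.

Definition cl_plus (a : Cl2) : Cl2 :=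
  match Req_EM_T (c0 a) 0, Req_EM_T (c1 a) 0, Req_EM_T (c2 a) 0,
        Req_EM_T (c3 a) 0 with
  | left _, left _, left _, left _ => cl_zero
  | _, _, _, _ =>
      match Req_EM_T (H a) 0 with
      | right _ => cl_scale (/ H a) (cl_bar a)
      | left _ => cl_scale (/ (4 * (c0 a ^ 2 + c3 a ^ 2))) (cl_prime a)
      end
  end.

(* Main.v *)
Require Import Defs.
From Stdlib Require Import Reals.
From Stdlib Require Import Lra Psatz.
Open Scope R_scope.

Ltac solve_comp :=
  f_equal; field_simplify_eq; auto; try lra.

Lemma case_H (a0 a1 a2 a3 : R) :
  a0^2-a1^2-a2^2+a3^2 <> 0 ->
  is_MP_inverse (mkCl2 a0 a1 a2 a3)
    (cl_scale (/ (a0^2-a1^2-a2^2+a3^2)) (cl_bar (mkCl2 a0 a1 a2 a3))).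
Proof.
  intros Hn. unfold is_MP_inverse, cl_mul, cl_scale, cl_bar, cl_prime; simpl.
  replace (a0 ^ 2 - a1 ^ 2 - a2 ^ 2 + a3 ^ 2) with (a0 * a0 - a1 * a1 - a2 * a2 + a3 * a3) in * by ring.
  repeat split; f_equal; field; auto.
Qed.

Lemma case_0 (a0 a1 a2 a3 : R) :
  a0^2-a1^2-a2^2+a3^2 = 0 -> a0^2+a3^2 <> 0 ->
  is_MP_inverse (mkCl2 a0 a1 a2 a3)
    (cl_scale (/ (4 * (a0^2+a3^2))) (cl_prime (mkCl2 a0 a1 a2 a3))).
Proof.
  intros H0 Hs.
  assert (h0 : a0 * (a0^2-a1^2-a2^2+a3^2) = 0) by (rewrite H0; ring).
  assert (h1 : a1 * (a0^2-a1^2-a2^2+a3^2) = 0) by (rewrite H0; ring).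
  assert (h2 : a2 * (a0^2-a1^2-a2^2+a3^2) = 0) by (rewrite H0; ring).
  assert (h3 : a3 * (a0^2-a1^2-a2^2+a3^2) = 0) by (rewrite H0; ring).
  unfold is_MP_inverse, cl_mul, cl_scale, cl_bar, cl_prime; simpl.
  repeat split; f_equal; field_simplify_eq; auto; nra.
Qed.

Theorem theorem3p1 (a : Cl2) : is_MP_inverse a (cl_plus a).
Proof.
  destruct a as [a0 a1 a2 a3]. unfold cl_plus, H; cbn [c0 Defs.c1 c2 c3].
  destruct (Req_EM_T a0 0) as [e0|n0]; destruct (Req_EM_T a1 0) as [e1|n1];
  destruct (Req_EM_T a2 0) as [e2|n2]; destruct (Req_EM_T a3 0) as [e3|n3];
  try (subst; unfold is_MP_inverse, cl_mul, cl_zero, cl_prime; simpl;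
       repeat split; f_equal; ring);
  (destruct (Req_EM_T (a0 ^ 2 - a1 ^ 2 - a2 ^ 2 + a3 ^ 2) 0) as [eh|nh];
   [apply case_0; [exact eh| intro hs; nra] | apply case_H; exact nh]).
Qed.
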